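(* For every integer $t\geq 2$ there exist a connected graph $G$ and a function $g:A\to B$ such that $fix(F_G)-fix(G)=t$.
   Context: A set $S\subseteq V(H)$ is a fixing set of a graph $H$ if the only automorphism of $H$ fixing every vertex of $S$ is the identity; $fix(H)$ is the minimum cardinality of a fixing set of $H$. Functigraph: let $G_1,G_2$ be disjoint copies of a connected graph $G$, with $A=V(G_1)$, $B=V(G_2)$, and let $g:A\to B$ be a function. The functigraph $F_G$ has vertex set $A\cup B$ and edge set $E(G_1)\cup E(G_2)\cup\{ug(u):u\in A\}$. *)

(* Defs.v *)
From mathcomp Require Import all_boot all_fingroup.
Set Implicit Arguments. Unset Strict Implicit. Unset Printing Implicit Defensive.

Definition simple_graph (T : finType) (e : rel T) : Prop :=
  symmetric e /\ irreflexive e.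

Definition connected_graph (T : finType) (e : rel T) : Prop :=
  0 < #|T| /\ forall x y : T, connect e x y.

Definition is_autb (T : finType) (e : rel T) (p : {perm T}) : bool :=
  [forall x, forall y, e (p x) (p y) == e x y].

Definition fixing_set (T : finType) (e : rel T) (S : {set T}) : bool :=
  [forall p : {perm T}, (is_autb e p && [forall x in S, p x == x]) ==> (p == 1%g)].

(* fix(H): minimum cardinality of a fixing set (setT is always fixing, so #|T| is a valid default). *)
Definition fixnum (T : finType) (e : rel T) : nat :=
  \big[minn/#|T|]_(S : {set T} | fixing_set e S) #|S|.

(* Functigraph F_G on A ∪ B = T + T (inl = copy G1 = A, inr = copy G2 = B),
   with edges E(G1) ∪ E(G2) ∪ {u g(u) : u ∈ A}. *)
Definition functigraph (T : finType) (e : rel T) (g : T -> T) : rel (T + T) :=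
  fun u v =>
    match u, v with
    | inl a, inl b => e a b
    | inr a, inr b => e a b
    | inl a, inr b => g a == b
    | inr b, inl a => g a == b
    end.

(* Main.v *)
Require Import Defs.
From mathcomp Require Import all_boot all_fingroup.
From mathcomp Require Import zify.
Lemma fixnum_le (T : finType) (e : rel T) S : fixing_set e S -> fixnum e <= #|S|.
Proof.
move=> HS; rewrite /fixnum -big_filter.
have : S \in [seq S <- index_enum {set T} | fixing_set e S] by rewrite mem_filter HS mem_index_enum.
elim: (filter _ _) => [//|a s IH]; rewrite inE big_cons => /orP [/eqP<-|/IH].
  exact: geq_minl.
by apply: leq_trans; apply: geq_minr.
Qed.
Lemma fixnum_ge (T : finType) (e : rel T) k : k <= #|T| ->
  (forall S, fixing_set e S -> k <= #|S|) -> k <= fixnum e.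
Proof.
move=> HT H; rewrite /fixnum; apply: (big_ind (fun x => k <= x)) => //.
  by move=> x y Hx Hy; rewrite leq_min Hx Hy.
Qed.
Lemma twin_aut (T : finType) (e : rel T) x y : symmetric e -> irreflexive e ->
  (forall z, z != x -> z != y -> e x z = e y z) -> is_autb e (tperm x y).
Proof.
move=> Hs Hi Ht; apply/forallP => u; apply/forallP => v; apply/eqP.
case: tpermP => [->|->|/eqP Hux /eqP Huy]; case: tpermP => [->|->|/eqP Hvx /eqP Hvy];
  rewrite ?Hi //; try by rewrite Hs.
- by rewrite Ht.
- by rewrite Ht.
- by rewrite Hs -Ht // Hs.
- by rewrite Hs Ht // Hs.
Qed.
Lemma twin_fix (T : finType) (e : rel T) S x y : symmetric e -> irreflexive e ->
  (forall z, z != x -> z != y -> e x z = e y z) -> fixing_set e S -> x != y ->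
  (x \in S) || (y \in S).
Proof.
move=> Hs Hi Ht /forallP /(_ (tperm x y)) H Hxy.
apply/negPn/negP; rewrite negb_or => /andP [HxS HyS].
move: H; rewrite twin_aut //=.
have -> : [forall x0 in S, tperm x y x0 == x0].
  apply/forall_inP => z Hz; rewrite tpermD //; apply/negP => /eqP E; subst.
  - by rewrite Hz in HxS.
  - by rewrite Hz in HyS.
move=> /= /eqP E; move: (tpermL x y); rewrite E perm1 => E2.
by rewrite E2 eqxx in Hxy.
Qed.

Lemma card_twins (T : finType) (S X : {set T}) :
  (forall x y, x \in X -> y \in X -> x != y -> (x \in S) || (y \in S)) ->
  #|X| <= #|X :&: S| + 1.
Proof.
move=> H; rewrite -(cardsID S X) leq_add2l.
apply/card_le1_eqP => x y; rewrite !inE => /andP [xS xX] /andP [yS yX].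
apply/eqP/negPn/negP => Hxy; move: (H x y xX yX); rewrite eq_sym => /(_ Hxy).
by rewrite (negbTE xS) (negbTE yS).
Qed.

Definition Kn n : rel 'I_n := fun x y => x != y.
Definition gc n : 'I_n.+1 -> 'I_n.+1 := fun _ => ord0.

Lemma Kn_simple n : simple_graph (Kn n).
Proof. split; [by move=> x y; rewrite /Kn eq_sym | by move=> x; rewrite /Kn eqxx]. Qed.

Lemma Kn_conn n : connected_graph (Kn n.+1).
Proof.
split; first by rewrite card_ord.
move=> x y; case: (eqVneq x y) => [->|H]; first exact: connect0.
exact: connect1.
Qed.

Lemma F_simple n (g : 'I_n -> 'I_n) : symmetric (functigraph (Kn n) g) /\ irreflexive (functigraph (Kn n) g).
Proof.
split.
- by move=> [a|a] [b|b] //=; rewrite /Kn eq_sym.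
- by move=> [a|a] /=; rewrite /Kn eqxx.
Qed.

Lemma fix_Kn n : fixnum (Kn n.+1) = n.
Proof.
apply/eqP; rewrite eqn_leq; apply/andP; split.
  apply: (@leq_trans #|[set~ (ord0 : 'I_n.+1)]|); last by rewrite cardsC1 card_ord.
  apply: fixnum_le; apply/forallP => p; apply/implyP => /andP [_ /forall_inP Hp].
  apply/eqP/permP => x; rewrite perm1.
  case: (eqVneq x ord0) => [->|Hx]; last by apply/eqP; apply: Hp; rewrite !inE.
  apply/eqP/negPn/negP => H.
  have Hq : p ord0 \in [set~ ord0] by rewrite !inE.
  move: (Hp _ Hq) => /eqP /perm_inj E.
  by rewrite E eqxx in H.
apply: fixnum_ge; first by rewrite card_ord.
move=> S HS.
have := @card_twins _ S setT.
rewrite cardsT card_ord setTI addn1 ltnS; apply.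
move=> x y _ _ Hxy; apply: (@twin_fix _ (Kn n.+1)) => //.
- exact: (Kn_simple n.+1).1.
- exact: (Kn_simple n.+1).2.
- by move=> z Hzx Hzy; rewrite /Kn eq_sym Hzx eq_sym Hzy.
Qed.


Lemma fix_F t : 2 <= t -> fixnum (functigraph (Kn t.+2) (gc t.+1)) = t.+1 + t.
Proof.
move=> ht.
set F := functigraph _ _.
have [Fs Fi] := F_simple _ (gc t.+1).
set o : 'I_t.+2 := ord0.
set i1 : 'I_t.+2 := inord 1.
set i2 : 'I_t.+2 := inord 2.
have v1 : i1 = 1 :> nat by rewrite /i1 inordK.
have v2 : i2 = 2 :> nat by rewrite /i2 inordK // !ltnS (leq_trans _ ht).
have n10 : i1 != o by apply/eqP => /(congr1 (@nat_of_ord _)); rewrite v1.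
have n20 : i2 != o by apply/eqP => /(congr1 (@nat_of_ord _)); rewrite v2.
have n21 : i2 != i1 by apply/eqP => /(congr1 (@nat_of_ord _)); rewrite v1 v2.
apply/eqP; rewrite eqn_leq; apply/andP; split.
  pose S0 := inl @: [set~ o] :|: inr @: ([set~ o] :\ i1).
  apply: (@leq_trans #|S0|).
    apply: fixnum_le; apply/forallP => p; apply/implyP => /andP [/forallP Ha /forall_inP Hp].
    have Ha' : forall x y, F (p x) (p y) = F x y by move=> x y; apply/eqP; exact: (forallP (Ha x) y).
    have HS : forall u, u \notin S0 -> u = inl o \/ u = inr o \/ u = inr i1.
      move=> [a|b]; rewrite !inE.
      - case: (eqVneq a o) => [->|Ha0]; first by left.
        by rewrite (mem_imset _ _ inl_inj) ?inE Ha0.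
      - case: (eqVneq b o) => [->|Hb0]; first by right; left.
        case: (eqVneq b i1) => [->|Hb1]; first by right; right.
        by rewrite (mem_imset _ _ (@inr_inj _ _)) ?inE ?Hb0 ?Hb1 ?orbT.
    have w1 : inl i2 \in S0 by rewrite !inE (mem_imset _ _ inl_inj) ?inE n20.
    have w2 : inr i2 \in S0 by rewrite !inE (mem_imset _ _ (@inr_inj _ _)) ?inE ?n20 ?n21 ?orbT.
    have pw1 := eqP (Hp _ w1); have pw2 := eqP (Hp _ w2).
    apply/eqP/permP => u; rewrite perm1.
    case: (boolP (u \in S0)) => Hu; first by apply/eqP; apply: Hp.
    have Hpu : p u \notin S0.
      apply/negP => H; move: (Hp _ H) => /eqP /perm_inj E.
      by rewrite -E H in Hu.
    have s1 := Ha' u (inl i2); have s2 := Ha' u (inr i2).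
    rewrite pw1 in s1; rewrite pw2 in s2.
    move: s1 s2; move: (HS _ Hpu) => [->|[->|->]]; case: (HS _ Hu) => [->|[->|->]];
      rewrite /F /= /Kn /gc -/o ?eqxx ?(eq_sym o i1) ?(eq_sym o i2) ?(negbTE n20) ?(negbTE n10) ?(negbTE n21) ?n20 ?n10 ?n21 //.
  rewrite /S0. rewrite cardsU; apply: (leq_trans (leq_subr _ _)); apply: leq_add.
    by apply: (leq_trans (leq_imset_card _ _)); rewrite cardsC1 card_ord.
  apply: (leq_trans (leq_imset_card _ _)).
  have := cardsD1 i1 [set~ o]; rewrite cardsC1 card_ord !inE n10 add1n => [[<-]] //.
apply: fixnum_ge; first by rewrite card_sum card_ord; lia.
move=> S HS.
pose X1 := [set inl x | x in [set: 'I_t.+2]] : {set 'I_t.+2 + 'I_t.+2}.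
pose X2 := [set inr x | x in [set~ o]] : {set 'I_t.+2 + 'I_t.+2}.
have cX1 : #|X1| = t.+2 by rewrite card_imset ?cardsT ?card_ord //; exact: inl_inj.
have cX2 : #|X2| = t.+1 by rewrite card_imset ?cardsC1 ?card_ord //; exact: inr_inj.
have H1 : #|X1| <= #|X1 :&: S| + 1.
  apply: card_twins => x y /imsetP [a _ ->] /imsetP [b _ ->] Hab.
  apply: (@twin_fix _ F) => //.
  move=> [c|c] Hc1 Hc2 //=.
  rewrite /Kn; move: Hc1 Hc2; rewrite !(inj_eq inl_inj) => Hc1 Hc2.
  by rewrite eq_sym Hc1 eq_sym Hc2.
have H2 : #|X2| <= #|X2 :&: S| + 1.
  apply: card_twins => x y /imsetP [a Ha ->] /imsetP [b Hb ->] Hab.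
  apply: (@twin_fix _ F) => //.
  move: Ha Hb; rewrite !inE => Ha Hb.
  move=> [c|c] Hc1 Hc2 /=.
    by rewrite /gc -/o (eq_sym o) (negbTE Ha) (eq_sym o) (negbTE Hb).
  rewrite /Kn; move: Hc1 Hc2; rewrite !(inj_eq (@inr_inj _ _)) => Hc1 Hc2.
  by rewrite eq_sym Hc1 eq_sym Hc2.
have D : (X1 :&: S) :&: (X2 :&: S) = set0.
  apply/setP => u; rewrite !inE.
  apply/negP => /andP [/andP [/imsetP [x _ E1] _] /andP [/imsetP [y _ E2] _]].
  by rewrite E1 in E2.
have Hsub : (X1 :&: S) :|: (X2 :&: S) \subset S.
  by apply/subsetP => u; rewrite !inE => /orP [/andP [_ ->]|/andP [_ ->]].
apply: (leq_trans _ (subset_leq_card Hsub)); rewrite cardsU D cards0 subn0.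
rewrite cX1 in H1; rewrite cX2 in H2; lia.
Qed.

Theorem lemma2p10 (t : nat) (ht : 2 <= t) :
  exists (n : nat) (e : rel 'I_n),
    simple_graph e /\ connected_graph e /\
    exists g : 'I_n -> 'I_n,
      fixnum (functigraph e g) = fixnum e + t.
Proof.
exists t.+2, (Kn t.+2); split; first exact: Kn_simple.
split; first exact: Kn_conn.
exists (gc t.+1); rewrite fix_F // fix_Kn //.
Qed.
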